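(* Consider the generalized linear model described in the context with $m=p=2$ and model matrix \[ \mathbf{X}=\begin{bmatrix}q_1(\mathbf{x}_1)&q_2(\mathbf{x}_1)\\ q_1(\mathbf{x}_2)&q_2(\mathbf{x}_2)\end{bmatrix} \] of full rank, and suppose $\nu_i>0$ for $i=1,2$. Then an allocation $\mathbf{w}_*=(w_1^*,w_2^* )^T\in S_2$ is A-optimal if and only if $w_i^*\propto\{\nu_i[q_1(\mathbf{x}_i)^2+q_2(\mathbf{x}_i)^2]\}^{-1/2}$, $i=1,2$.
   Context: Generalized linear model (GLM): independent responses $Y_i$ from a one-parameter exponential family with $E(Y_i)=\mu_i$ and $\eta_i=g(\mu_i)=\mathbf{q}(\mathbf{x}_i)^T\boldsymbol\beta$, where $g$ is the link function, $\mathbf{q}(\mathbf{x})=(q_1(\mathbf{x}),\ldots,q_p(\mathbf{x}))^T$ are predictor functions, and $\boldsymbol\beta\in\mathbb{R}^p$ is a fixed (assumed) parameter vector. Let $\nu_i=(\partial\mu_i/\partial\eta_i)^2/\mathrm{Var}(Y_i)$. Let $S_m=\{\mathbf{w}\in\mathbb{R}^m: w_i\ge0,\sum_iw_i=1\}$, $\mathbf{W}=\mathrm{diag}\{w_1\nu_1,\ldots,w_m\nu_m\}$, $f(\mathbf{w})=|\mathbf{X}^T\mathbf{W}\mathbf{X}|$, and $h(\mathbf{w})=[\mathrm{tr}((\mathbf{X}^T\mathbf{W}\mathbf{X})^{-1})]^{-1}$ if $f(\mathbf{w})>0$, $h(\mathbf{w})=0$ otherwise. An allocation is A-optimal if it maximizes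 $h$ over $S_m$. *)

(* Defs.v *)
(* real closed field R (needs square roots). *)
From HB Require Import structures.
From mathcomp Require Import all_boot all_order all_algebra.
Set Implicit Arguments. Unset Strict Implicit. Unset Printing Implicit Defensive.
Import Order.TTheory GRing.Theory Num.Theory.
Local Open Scope ring_scope.

Section GLM.
Variable R : rcfType.

Definition simplex (m : nat) (w : 'I_m -> R) : Prop :=
  (forall i, 0 <= w i) /\ \sum_(i < m) w i = 1.

Definition Wmat (m : nat) (nu w : 'I_m -> R) : 'M[R]_m :=
  diag_mx (\row_i (w i * nu i)).

Definition infomx (m p : nat) (X : 'M[R]_(m, p)) (nu w : 'I_m -> R) : 'M[R]_p :=
  X^T *m Wmat nu w *m X.

Definition fdet (m p : nat) (X : 'M[R]_(m, p)) (nu w : 'I_m -> R) : R :=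
  \det (infomx X nu w).

Definition hA (m p : nat) (X : 'M[R]_(m, p)) (nu w : 'I_m -> R) : R :=
  if 0 < fdet X nu w then (\tr (invmx (infomx X nu w)))^-1 else 0.

Definition A_optimal (m p : nat) (X : 'M[R]_(m, p)) (nu w : 'I_m -> R) : Prop :=
  simplex w /\ forall w' : 'I_m -> R, simplex w' -> hA X nu w' <= hA X nu w.

End GLM.

(* Main.v *)
Require Import Defs.
From HB Require Import structures.
From mathcomp Require Import all_boot all_order all_algebra.
From mathcomp Require Import ring lra.
Import Order.TTheory GRing.Theory Num.Theory.
Local Open Scope ring_scope.

Lemma det2 (R : comNzRingType) (A : 'M[R]_2) : \det A = A 0 0 * A 1 1 - A 0 1 * A 1 0.
Proof.
rewrite (expand_det_row _ 0) big_ord_recr big_ord1 /cofactor !det_mx11 /= !mxE /=.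
have -> : widen_ord (leqnSn 1) ord0 = 0 :> 'I_2 by exact: val_inj.
have -> : lift 0 0 = 1 :> 'I_2 by exact: val_inj.
have -> : lift ord_max 0 = 0 :> 'I_2 by exact: val_inj.
have -> : ord_max = 1 :> 'I_2 by exact: val_inj.
rewrite expr0 expr1; ring.
Qed.

Lemma tradj2 (R : comNzRingType) (A : 'M[R]_2) : \tr (\adj A) = A 0 0 + A 1 1.
Proof.
rewrite /mxtrace big_ord_recr big_ord1 !mxE /cofactor !det_mx11 !mxE /=.
have -> : widen_ord (leqnSn 1) ord0 = 0 :> 'I_2 by exact: val_inj.
have -> : lift 0 0 = 1 :> 'I_2 by exact: val_inj.
have -> : lift ord_max 0 = 0 :> 'I_2 by exact: val_inj.
rewrite expr0 /=; ring.
Qed.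

Set Implicit Arguments.

Lemma key (R : realFieldType) (F t0 t1 u0 u1 : R) :
  0 < t0 -> 0 < t1 -> 0 < u0 -> 0 < u1 -> u0 + u1 = 1 ->
  F / (t0 + t1) ^+ 2 - F * (u0 * u1) / (u0 * t0 ^+ 2 + u1 * t1 ^+ 2) =
  F * (u0 * t0 - u1 * t1) ^+ 2 / ((t0 + t1) ^+ 2 * (u0 * t0 ^+ 2 + u1 * t1 ^+ 2)).
Proof.
move=> h0 h1 p0 p1 s.
have D1 : u0 * t0 ^+ 2 + u1 * t1 ^+ 2 != 0.
  by rewrite gt_eqF // ltr_wpDr ?mulr_ge0 ?sqr_ge0 ?ltW // mulr_gt0 // exprn_gt0.
have D2 : (t0 + t1) ^+ 2 != 0 by rewrite expf_neq0 // gt_eqF // addr_gt0.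
have E : u1 = 1 - u0 by rewrite -s addrC addKr.
move: D1; rewrite E => D1.
field. by rewrite D1 gt_eqF // addr_gt0.
Qed.

Lemma pos2 (R : realFieldType) (u0 u1 : R) :
  0 <= u0 -> 0 <= u1 -> 0 < u0 * u1 -> 0 < u0 /\ 0 < u1.
Proof.
move=> a b c; split; rewrite lt0r ?a ?b andbT; apply: contraTneq c => ->;
  by rewrite ?mul0r ?mulr0 ltxx.
Qed.

Lemma fdet2 (R : rcfType) (X : 'M[R]_2) (nu w : 'I_2 -> R) :
  fdet X nu w = w 0 * w 1 * (nu 0 * nu 1 * (\det X) ^+ 2).
Proof.
rewrite /fdet /infomx /Wmat !det_mulmx det_tr det_diag big_ord_recr big_ord1 !mxE /=.
have -> : widen_ord (leqnSn 1) ord0 = 0 :> 'I_2 by exact: val_inj.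
have -> : ord_max = 1 :> 'I_2 by exact: val_inj.
ring.
Qed.

Lemma tr2 (R : rcfType) (X : 'M[R]_2) (nu w : 'I_2 -> R) :
  \tr (infomx X nu w) = w 0 * (nu 0 * (X 0 0 ^+ 2 + X 0 1 ^+ 2))
                      + w 1 * (nu 1 * (X 1 0 ^+ 2 + X 1 1 ^+ 2)).
Proof.
rewrite /mxtrace /infomx /Wmat big_ord_recr big_ord1 /=.
rewrite !mxE mul_mx_diag !big_ord_recr !big_ord0 /= !mxE /=.
have -> : widen_ord (leqnSn 1) ord0 = 0 :> 'I_2 by exact: val_inj.
have -> : ord_max = 1 :> 'I_2 by exact: val_inj.
have -> : widen_ord (leqnSn 1) ord_max = 0 :> 'I_2 by exact: val_inj.
ring.
Qed.

Lemma trgen (R : comNzRingType) (A : 'M[R]_2) : \tr A = A 0 0 + A 1 1.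
Proof.
rewrite /mxtrace big_ord_recr big_ord1 /=.
have -> : widen_ord (leqnSn 1) ord0 = 0 :> 'I_2 by exact: val_inj.
have -> : ord_max = 1 :> 'I_2 by exact: val_inj.
by [].
Qed.

Lemma hA2 (R : rcfType) (X : 'M[R]_2) (nu w : 'I_2 -> R) :
  0 < nu 0 * nu 1 * (\det X) ^+ 2 ->
  hA X nu w = if 0 < w 0 * w 1 then
     (nu 0 * nu 1 * (\det X) ^+ 2) * (w 0 * w 1) /
     (w 0 * (nu 0 * (X 0 0 ^+ 2 + X 0 1 ^+ 2))
                      + w 1 * (nu 1 * (X 1 0 ^+ 2 + X 1 1 ^+ 2))) else 0.
Proof.
move=> Fp; rewrite /hA fdet2 pmulr_lgt0 //; case: ifP => // pos.
have U : infomx X nu w \in unitmx.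
  by rewrite unitmxE unitfE -/(fdet X nu w) fdet2 gt_eqF // mulr_gt0.
rewrite /invmx U mxtraceZ tradj2 -trgen tr2 -/(fdet X nu w) fdet2 invfM invrK.
by rewrite [X in X / _]mulrC.
Qed.

Lemma ord2P (i : 'I_2) : i = 0 \/ i = 1.
Proof. by case: i => [[|[|i]] Hi]; [left; apply/val_inj|right; apply/val_inj|]. Qed.

Lemma rowpos (R : rcfType) (a b c d : R) :
  a * d - b * c != 0 -> 0 < a ^+ 2 + b ^+ 2.
Proof.
move=> H; rewrite lt0r addr_ge0 ?sqr_ge0 // andbT.
apply: contra H; rewrite paddr_eq0 ?sqr_ge0 // !sqrf_eq0 => /andP[/eqP -> /eqP ->].
by rewrite !mul0r subrr.
Qed.

Theorem corollary2 (R : rcfType) (X : 'M[R]_2) (nu : 'I_2 -> R)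
    (w : 'I_2 -> R) :
  \rank X = 2%N ->
  (forall i, 0 < nu i) ->
  simplex w ->
  (A_optimal X nu w <->
   exists k : R, forall i : 'I_2,
     w i = k * (Num.sqrt (nu i * (X i 0 ^+ 2 + X i 1 ^+ 2)))^-1).
Proof.
move=> rk nup sw.
have detX : \det X != 0.
  have : row_free X by rewrite /row_free rk.
  by rewrite row_free_unit unitmxE unitfE.
have Fp : 0 < nu 0 * nu 1 * (\det X) ^+ 2.
  have d2 : 0 < (\det X) ^+ 2 by rewrite lt0r sqr_ge0 expf_neq0.
  by apply: mulr_gt0 => //; apply: mulr_gt0.
set F := nu 0 * nu 1 * (\det X) ^+ 2 in Fp.
have detE := @det2 _ X.
have s0p : 0 < nu 0 * (X 0 0 ^+ 2 + X 0 1 ^+ 2).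
  by rewrite mulr_gt0 // (@rowpos _ _ _ (X 1 0) (X 1 1)) // -detE.
have s1p : 0 < nu 1 * (X 1 0 ^+ 2 + X 1 1 ^+ 2).
  rewrite mulr_gt0 // (@rowpos _ _ _ (- X 0 0) (- X 0 1)) //.
  by apply: contra detX => /eqP H; rewrite detE -H; apply/eqP; ring.
set s0 := nu 0 * _ in s0p.
set s1 := nu 1 * _ in s1p.
set t0 := Num.sqrt s0.
set t1 := Num.sqrt s1.
have t0p : 0 < t0 by rewrite sqrtr_gt0.
have t1p : 0 < t1 by rewrite sqrtr_gt0.
have e0 : s0 = t0 ^+ 2 by rewrite sqr_sqrtr // ltW.
have e1 : s1 = t1 ^+ 2 by rewrite sqr_sqrtr // ltW.
have tt : (fun i : 'I_2 => Num.sqrt (nu i * (X i 0 ^+ 2 + X i 1 ^+ 2))) 0 = t0 by [].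
have tt1 : (fun i : 'I_2 => Num.sqrt (nu i * (X i 0 ^+ 2 + X i 1 ^+ 2))) 1 = t1 by [].
have hf : forall w', hA X nu w' = if 0 < w' 0 * w' 1 then
     F * (w' 0 * w' 1) / (w' 0 * t0 ^+ 2 + w' 1 * t1 ^+ 2) else 0.
  by move=> w'; rewrite hA2 // -e0 -e1.
have sum2 : forall w' : 'I_2 -> R, \sum_(i < 2) w' i = w' 0 + w' 1.
  move=> w'; rewrite big_ord_recr big_ord1 /=.
  have -> : widen_ord (leqnSn 1) ord0 = 0 :> 'I_2 by exact: val_inj.
  have -> : ord_max = 1 :> 'I_2 by exact: val_inj.
  by [].
have tsp : 0 < t0 + t1 by rewrite addr_gt0.
have tsn : t0 + t1 != 0 by rewrite gt_eqF.
have hopt : forall w' : 'I_2 -> R, 0 < w' 0 -> 0 < w' 1 -> w' 0 + w' 1 = 1 ->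
    w' 0 * t0 = w' 1 * t1 -> hA X nu w' = F / (t0 + t1) ^+ 2.
  move=> w' p0 p1 s E; rewrite hf mulr_gt0 //.
  apply/eqP; rewrite eq_sym -subr_eq0 (@key _ F _ _ _ _ t0p t1p p0 p1 s) E subrr expr0n /=.
  by rewrite mulr0 mul0r.
have hle : forall w' : 'I_2 -> R, 0 < w' 0 -> 0 < w' 1 -> w' 0 + w' 1 = 1 ->
    hA X nu w' <= F / (t0 + t1) ^+ 2 ?= iff (w' 0 * t0 == w' 1 * t1).
  move=> w' p0 p1 s; rewrite hf mulr_gt0 //.
  split.
    rewrite -subr_ge0 (@key _ F _ _ _ _ t0p t1p p0 p1 s).
    apply: divr_ge0; first exact: mulr_ge0 (ltW Fp) (sqr_ge0 _).
    apply: mulr_ge0; first exact: sqr_ge0.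
    by apply: addr_ge0; apply: mulr_ge0; rewrite ?sqr_ge0 ?ltW.
  rewrite eq_sym -subr_eq0 (@key _ F _ _ _ _ t0p t1p p0 p1 s) mulf_eq0 invr_eq0 mulf_eq0.
  rewrite (gt_eqF Fp) /= sqrf_eq0 subr_eq0 mulf_eq0 expf_eq0 (negbTE tsn) andbF /=.
  have Dp : 0 < w' 0 * t0 ^+ 2 + w' 1 * t1 ^+ 2.
    by rewrite ltr_wpDr ?mulr_ge0 ?sqr_ge0 ?ltW // mulr_gt0 // exprn_gt0.
  by rewrite (gt_eqF Dp) orbF.
split.
- move=> [_ Hopt].
  pose ws := fun i : 'I_2 => if i == 0 then t1 / (t0 + t1) else t0 / (t0 + t1).
  have ws0 : ws 0 = t1 / (t0 + t1) by [].
  have ws1 : ws 1 = t0 / (t0 + t1) by [].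
  have sws : simplex ws.
    split; last by rewrite sum2 ws0 ws1 -mulrDl addrC divff.
    by move=> i; rewrite /ws; case: ifP => _; rewrite divr_ge0 // ltW.
  have := Hopt ws sws.
  rewrite (hopt ws); first last.
  + by rewrite ws0 ws1; field.
  + by rewrite ws0 ws1 -mulrDl addrC divff.
  + by rewrite ws1 divr_gt0.
  + by rewrite ws0 divr_gt0.
  case: sw => wge wsum; rewrite sum2 in wsum.
  move: (hf w); case: ifP => pos hw.
    have [p0 p1] := @pos2 _ _ _ (wge 0) (wge 1) pos.
    move=> le; have L := hle w p0 p1 wsum.
    have /eqP E : w 0 * t0 == w 1 * t1.
      by rewrite -(eq_leif L) eq_le le andbT; case: L.
    exists (w 0 * t0) => i; case: (ord2P i) => ->; rewrite ?tt ?tt1 -/t0 -/t1.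
      by rewrite mulfK // gt_eqF.
    by rewrite E mulfK // gt_eqF.
  rewrite hw => H; exfalso; move: H; apply/negP; rewrite -ltNge.
  by rewrite divr_gt0 // exprn_gt0.
- move=> [k Hk].
  have w0E : w 0 = k / t0 by rewrite Hk.
  have w1E : w 1 = k / t1 by rewrite Hk.
  case: sw => wge wsum; rewrite sum2 in wsum.
  have kp : 0 < k.
    have : 0 < k * (t0^-1 + t1^-1).
      by rewrite mulrDr -w0E -w1E wsum ltr01.
    by rewrite pmulr_lgt0 // addr_gt0 // invr_gt0.
  have p0 : 0 < w 0 by rewrite w0E divr_gt0.
  have p1 : 0 < w 1 by rewrite w1E divr_gt0.
  have E : w 0 * t0 = w 1 * t1.
    by rewrite w0E w1E !divfK // gt_eqF.
  split; first by split => //; rewrite sum2.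
  move=> w' [w'ge w'sum]; rewrite sum2 in w'sum.
  rewrite (hopt w p0 p1 wsum E).
  move: (hf w'); case: ifP => pos hw.
    have [q0 q1] := @pos2 _ _ _ (w'ge 0) (w'ge 1) pos.
    exact: (hle w' q0 q1 w'sum).
  by rewrite hw divr_ge0 // ?ltW // exprn_gt0.
Qed.
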